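(* Let $\varrho=\rho_1\otimes\cdots\otimes\rho_n$ be a product state on $\mathcal K=\bigotimes_{i=1}^n\mathcal H_i$ (finite-dimensional Hilbert spaces). For $1\le i\ne j\le n$ let $X_{ij}=X_{ji}$ be an observable on $\mathcal K$ acting nontrivially only on the $i$th and $j$th tensor components. Define $X_i=\sum_{j\ne i}X_{ij}$ and $X=\sum_{i\ne j}X_{ij}=\sum_iX_i$. Then $$\mathrm{Var}_\varrho[X]\le4\sum_{i=1}^n\mathbb E_\varrho[(\mathcal D_iX_i)^2]=4\sum_{i=1}^n\mathbb E_\varrho[X_i^2]-4\sum_{i=1}^n\mathbb E_{\varrho\otimes\varrho}\big[(X_i\otimes I)F_i(X_i\otimes I)F_i\big].$$
   Context: $\mathbb E_\tau[Y]=\mathrm{Tr}[\tau Y]$, $\mathrm{Var}_\varrho[X]=\mathbb E_\varrho[X^2]-\mathbb E_\varrho[X]^2$. For $i\in[n]$, $\mathcal E_iY=\mathrm{Tr}_i[(\rho_i\otimes I)Y]$, regarded as an operator on $\mathcal K$ by tensoring with the identity on $\mathcal H_i$, and $\mathcal D_iY=Y-\mathcal E_iY$. $F_i$ is the swap operator on $\mathcal K\otimes\mathcal K$ exchanging the $i$th tensor component of the first copy with the $i$th tensor component of the second copy. ''Acting nontrivially only on components $i,j$'' means the operator has the form $Y\otimes I$ with $Y$ acting on $\mathcal H_i\otimes\mathcal H_j$ and $I$ the identity on the remaining factors. *)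

(* Defs.v *)
From mathcomp Require Import all_boot all_order all_algebra.
Set Implicit Arguments. Unset Strict Implicit. Unset Printing Implicit Defensive.
Import Order.TTheory GRing.Theory Num.Theory.
Local Open Scope ring_scope.

Section Ops.
Variable C : numClosedFieldType.

(* linear operators on C^T, as matrices indexed by the finite basis T *)
Definition op (T : finType) := T -> T -> C.

Definition q_opmul (T : finType) (A B : op T) : op T :=
  fun x y => \sum_z A x z * B z y.
Definition q_opid (T : finType) : op T := fun x y => (x == y)%:R.
Definition q_optr (T : finType) (A : op T) : C := \sum_x A x x.
Definition q_hermitian (T : finType) (A : op T) : Prop :=
  forall x y, A y x = (A x y)^*.
Definition q_psd (T : finType) (A : op T) : Prop :=
  forall v : T -> C, 0 <= \sum_x \sum_y (v x)^* * A x y * v y.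
Definition q_density (T : finType) (A : op T) : Prop := q_psd A /\ q_optr A = 1.
Definition q_expect (T : finType) (tau Y : op T) : C := q_optr (q_opmul tau Y).
Definition q_variance (T : finType) (rho A : op T) : C :=
  q_expect rho (q_opmul A A) - (q_expect rho A) ^+ 2.
Definition q_optensor (T U : finType) (A : op T) (B : op U) : op (T * U)%type :=
  fun x y => A x.1 y.1 * B x.2 y.2.
End Ops.

Section Tensor.
Variable C : numClosedFieldType.
Variables (n : nat) (d : 'I_n -> nat).

(* basis of K = (x)_i H_i, H_i = C^(d i) *)
Definition q_idx := {dffun forall i : 'I_n, 'I_(d i)}.

Definition q_upd (x : q_idx) (i : 'I_n) (a : 'I_(d i)) : q_idx :=
  [ffun j => dfwith (fun k => x k) a j].

Definition q_prod_state (rho : forall i : 'I_n, op C 'I_(d i)) : op C q_idx :=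
  fun x y => \prod_i rho i (x i) (y i).

(* E_i Y = Tr_i[(rho_i (x) I) Y] (x) I_{H_i} *)
Definition q_condexp (rho : forall i : 'I_n, op C 'I_(d i)) (i : 'I_n)
    (Y : op C q_idx) : op C q_idx :=
  fun x y => (x i == y i)%:R *
    \sum_(a : 'I_(d i)) \sum_(b : 'I_(d i)) rho i a b * Y (q_upd x b) (q_upd y a).

Definition q_Dop (rho : forall i : 'I_n, op C 'I_(d i)) (i : 'I_n)
    (Y : op C q_idx) : op C q_idx :=
  fun x y => Y x y - q_condexp rho i Y x y.

(* F_i on K (x) K: swaps the i-th components of the two copies *)
Definition q_swapop (i : 'I_n) : op C (q_idx * q_idx)%type :=
  fun p q => ((p.1 == q_upd q.1 (q.2 i)) && (p.2 == q_upd q.2 (q.1 i)))%:R.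

(* A = Y (x) I with Y acting on H_i (x) H_j *)
Definition q_acts_on2 (i j : 'I_n) (A : op C q_idx) : Prop :=
  exists Y : op C ('I_(d i) * 'I_(d j))%type, forall x y,
    A x y = Y (x i, x j) (y i, y j) *
            [forall k, ((k != i) && (k != j)) ==> (x k == y k)]%:R.
End Tensor.

(* Main.v *)
Require Import Defs.
From mathcomp Require Import all_boot all_order all_algebra.
From mathcomp Require Import sesquilinear spectral.
From Stdlib Require Import FunctionalExtensionality.
From mathcomp Require Import ring.
Import Order.TTheory GRing.Theory Num.Theory.
Local Open Scope ring_scope.

Section Upd.
Context {n : nat} {d : 'I_n -> nat}.
Local Notation T := (q_idx d).

Lemma upd_at (x : T) {k} (a : 'I_(d k)) : q_upd x a k = a.
Proof. by rewrite /q_upd ffunE dfwith_in. Qed.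

Lemma upd_ne (x : T) {k} (a : 'I_(d k)) j : k != j -> q_upd x a j = x j.
Proof. by move=> kj; rewrite /q_upd ffunE dfwith_out. Qed.

Lemma upd_upd (x : T) {k} (a b : 'I_(d k)) : q_upd (q_upd x a) b = q_upd x b.
Proof.
apply/ffunP => j; case: (eqVneq k j) => [<-|kj]; first by rewrite !upd_at.
by rewrite !upd_ne.
Qed.

Lemma upd_id (x : T) k : q_upd x (x k) = x.
Proof.
apply/ffunP => j; case: (eqVneq k j) => [<-|kj]; first by rewrite !upd_at.
by rewrite !upd_ne.
Qed.

Lemma upd_comm (x : T) {k l} (a : 'I_(d k)) (b : 'I_(d l)) : k != l ->
  q_upd (q_upd x a) b = q_upd (q_upd x b) a.
Proof.
move=> kl; apply/ffunP => j.
case: (eqVneq k j) => [<-|kj].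
  by rewrite upd_ne 1?eq_sym // !upd_at.
case: (eqVneq l j) => [<-|lj]; first by rewrite upd_at upd_ne // upd_at.
by rewrite !upd_ne.
Qed.

Lemma upd_inj (x y : T) {k} (a b : 'I_(d k)) : q_upd x a = q_upd y b -> a = b.
Proof. by move=> e; have := upd_at x a; rewrite e upd_at. Qed.

Lemma eq_upd (x y : T) k (a : 'I_(d k)) :
  (x == y) = (x k == y k) && (q_upd x a == q_upd y a).
Proof.
apply/eqP/andP => [->|[/eqP e1 /eqP e2]]; first by rewrite !eqxx.
by rewrite -(upd_id x k) -(upd_id y k) e1 -(upd_upd x a) e2 upd_upd.
Qed.

Lemma eq_upd2 (x y : T) k (a b : 'I_(d k)) :
  (q_upd x a == q_upd y b) = (a == b) && (q_upd x a == q_upd y a).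
Proof.
rewrite (eq_upd _ _ k a) !upd_at !upd_upd.
by case: (eqVneq a b) => [->|] //=; rewrite ?eqxx.
Qed.

Lemma sum_upd {C : numClosedFieldType} k (c : 'I_(d k)) (F : T -> C) :
  \sum_y F y = \sum_(x : T | x k == c) \sum_(a : 'I_(d k)) F (q_upd x a).
Proof.
rewrite exchange_big /= (partition_big (fun y : T => y k) predT) //=.
apply: eq_bigr => a _.
rewrite (reindex_onto (fun x : T => q_upd x a) (fun y : T => q_upd y c)) /=.
  apply: eq_bigl => x; rewrite upd_at eqxx /= upd_upd.
  apply/eqP/eqP => e; [by rewrite -e ?upd_at | by rewrite -e ?upd_upd upd_id].
by move=> y /eqP <-; rewrite upd_upd upd_id.
Qed.

End Upd.

Lemma sum_prod_dffun (C : numClosedFieldType) (n : nat) (d : 'I_n -> nat)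
  (F : forall i : 'I_n, 'I_(d i) -> C) :
  \sum_(x : q_idx d) \prod_i F i (x i) = \prod_i \sum_(a : 'I_(d i)) F i a.
Proof.
pose T_ := fun i : 'I_n => ('I_(d i) : finType).
pose P_ := fun i : 'I_n => [ffun a : T_ i => F i a].
rewrite (reindex (@dffun_of_fprod _ T_)); last exact/onW_bij/dffun_of_fprod_bij.
transitivity (\sum_(t : fprod T_) \prod_(i in 'I_n) P_ i (t i)).
  by apply: eq_bigr => t _; apply: eq_bigr => i _; rewrite /P_ !ffunE.
rewrite (big_fprod 1 (+%R : Monoid.add_law (0:C) *%R) P_).
transitivity (\prod_i \sum_(j | tagged_with T_ i j) untag 0 (P_ i) j).
  by rewrite bigA_distr_big_dep.
apply: eq_bigr => i _.
transitivity (\sum_(a : T_ i) P_ i a); last by apply: eq_bigr => a _; rewrite /P_ ffunE.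
rewrite (big_tag (fun i a => P_ i a) i); apply: eq_bigl => j; by rewrite inE.
Qed.

Lemma sum_delta (C : numClosedFieldType) (I : finType) (c : I) (F : I -> C) :
  \sum_b (b == c)%:R * F b = F c.
Proof.
rewrite (bigD1 c) //= eqxx mul1r big1 ?addr0 // => b /negbTE ->; by rewrite mul0r.
Qed.

Lemma sum_delta' (C : numClosedFieldType) (I : finType) (c : I) (F : I -> C) :
  \sum_b (c == b)%:R * F b = F c.
Proof. by under eq_bigr do rewrite eq_sym; rewrite sum_delta. Qed.

Lemma exchange4 (C : numClosedFieldType) (I J : finType) (F : I -> I -> J -> J -> C) :
  \sum_a \sum_b \sum_c \sum_e F a b c e = \sum_c \sum_e \sum_a \sum_b F a b c e.
Proof.
under eq_bigr do rewrite exchange_big /=.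
rewrite exchange_big /=.
apply: eq_bigr => c _.
under eq_bigr do rewrite exchange_big /=.
by rewrite exchange_big.
Qed.

Section Main.
Variables (C : numClosedFieldType) (n : nat) (d : 'I_n -> nat).
Variable rho : forall i : 'I_n, op C 'I_(d i).
Hypothesis tr1 : forall i, \sum_a rho i a a = 1.
Local Notation T := (q_idx d).
Local Notation rhoT := (q_prod_state rho).

Definition Rk k (x y : T) := \prod_(j | j != k) rho j (x j) (y j).

Lemma rho_split k (x y : T) : rhoT x y = rho k (x k) (y k) * Rk k x y.
Proof. by rewrite /q_prod_state (bigD1 k). Qed.

Lemma Rk_upd k (x y : T) (a b : 'I_(d k)) : Rk k (q_upd x a) (q_upd y b) = Rk k x y.
Proof. by apply: eq_bigr => j jk; rewrite !upd_ne // eq_sym. Qed.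

Lemma sumR k (c : 'I_(d k)) : \sum_(x : T | x k == c) Rk k x x = 1.
Proof.
pose F := fun (i : 'I_n) (a : 'I_(d i)) =>
  if i == k then (nat_of_ord a == nat_of_ord c)%:R else rho i a a.
transitivity (\sum_(x : T) \prod_i F i (x i)).
  rewrite big_mkcond /=; apply: eq_bigr => x _.
  rewrite (bigD1 k) //= /F (eqxx k) /Rk.
  have -> : (nat_of_ord (x k) == nat_of_ord c) = (x k == c) by [].
  case: (x k == c); rewrite ?mul1r ?mul0r //.
  by apply: eq_bigr => j /negbTE ->.
rewrite sum_prod_dffun (bigD1 k) //= [X in _ * X]big1 ?mulr1.
  rewrite /F (eqxx k); have -> : \sum_(a < d k) (nat_of_ord a == nat_of_ord c)%:R
     = \sum_(a < d k) (a == c)%:R * (1 : C) by apply: eq_bigr => a _; rewrite mulr1.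
  by rewrite sum_delta.
by move=> j /negbTE jk; rewrite /F jk tr1.
Qed.

Lemma tr_rhoT : \sum_(x : T) rhoT x x = 1.
Proof.
rewrite /q_prod_state (@sum_prod_dffun C n d (fun i a => rho i a a)).
by rewrite big1 // => i _; rewrite tr1.
Qed.

Lemma case_c k (P : Prop) : (forall c : 'I_(d k), P) -> ((T -> False) -> P) -> P.
Proof.
move=> H1 H2; case: (pickP (@predT 'I_(d k))) => [c _|h]; first exact: H1 c.
by apply: H2 => x; have := h (x k).
Qed.

Definition triv k (A : op C T) := forall (x y : T) (a b : 'I_(d k)),
  A (q_upd x a) (q_upd y b) = (a == b)%:R * A x (q_upd y (x k)).

Lemma triv_eq k A (x y : T) : triv k A -> A x y = (x k == y k)%:R * A x (q_upd y (x k)).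
Proof. by move=> tA; rewrite -{1}(upd_id x k) -{1}(upd_id y k) tA. Qed.

Local Notation Ek := (q_condexp rho).

Lemma EkE k Y (x y : T) : Ek k Y x y =
  (x k == y k)%:R * \sum_(a : 'I_(d k)) \sum_(b : 'I_(d k)) rho k a b * Y (q_upd x b) (q_upd y a).
Proof. by []. Qed.

Lemma triv_Ek k Y : triv k (Ek k Y).
Proof.
move=> x y a b; rewrite !EkE !upd_at eqxx mul1r; congr (_ * _).
by apply: eq_bigr => a' _; apply: eq_bigr => b' _; rewrite !upd_upd.
Qed.

Lemma eq_upd_any (x y : T) k (a b : 'I_(d k)) :
  (q_upd x a == q_upd y a) = (q_upd x b == q_upd y b).
Proof.
by apply/eqP/eqP => e; [rewrite -(upd_upd x a) e upd_upd | rewrite -(upd_upd x b) e upd_upd].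
Qed.

Lemma Ek_id k : Ek k (@q_opid C T) = @q_opid C T.
Proof.
apply: functional_extensionality => x; apply: functional_extensionality => y.
rewrite EkE /q_opid.
transitivity ((x k == y k)%:R * \sum_(a : 'I_(d k)) rho k a a * (q_upd x (x k) == q_upd y (x k))%:R :> C).
  congr (_ * _); apply: eq_bigr => a _.
  rewrite (bigD1 a) //= big1 ?addr0; first by rewrite (eq_upd_any _ _ _ a (x k)).
  by move=> b ba; rewrite eq_upd2 (negbTE ba) mulr0.
rewrite -mulr_suml tr1 mul1r (eq_upd x y k (x k)) upd_id.
by case: (x k == y k); rewrite ?mul1r ?mul0r.
Qed.


Lemma opmul_id (A : op C T) : q_opmul A (@q_opid C T) = A.
Proof.
apply: functional_extensionality => x; apply: functional_extensionality => y.
by rewrite /q_opmul /q_opid; under eq_bigr do rewrite mulrC; rewrite sum_delta.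
Qed.

Lemma upd_idE {w x : T} {k} : w k == x k -> q_upd w (x k) = w.
Proof. by move/eqP <-; rewrite upd_id. Qed.

Lemma Ek_mull k A B : triv k A -> Ek k (q_opmul A B) = q_opmul A (Ek k B).
Proof.
move=> tA; apply: functional_extensionality => x; apply: functional_extensionality => y.
rewrite EkE /q_opmul.
transitivity ((x k == y k)%:R * \sum_(w : T | w k == x k) \sum_(a : 'I_(d k)) \sum_(b : 'I_(d k))
   rho k a b * (A x w * B (q_upd w b) (q_upd y a))).
  congr (_ * _).
  transitivity (\sum_(a : 'I_(d k)) \sum_(b : 'I_(d k)) \sum_(w : T | w k == x k)
     rho k a b * (A x w * B (q_upd w b) (q_upd y a))); last first.
    rewrite [RHS]exchange_big /=; apply: eq_bigr => a _; by rewrite [RHS]exchange_big.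
  apply: eq_bigr => a _; apply: eq_bigr => b _; rewrite mulr_sumr.
  rewrite (sum_upd k (x k)); apply: eq_bigr => w wk.
  under eq_bigr do rewrite tA (upd_idE wk).
  under eq_bigr do rewrite -mulrA mulrCA.
  by rewrite sum_delta' mulrA.
rewrite (sum_upd k (x k)) mulr_sumr; apply: eq_bigr => w wk; symmetry.
under eq_bigr do rewrite (triv_eq _ _ _ _ tA) upd_at upd_upd (upd_idE wk) EkE upd_at.
rewrite (bigD1 (x k)) //= [X in _ + X]big1 ?addr0; last first.
  by move=> b bx; rewrite [x k == b]eq_sym (negbTE bx) !mul0r.
rewrite eqxx mul1r mulrCA; congr (_ * _); rewrite mulr_sumr; apply: eq_bigr => a _.
rewrite mulr_sumr; apply: eq_bigr => b _; by rewrite mulrCA upd_upd.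
Qed.

Lemma triv_eq2 k A (w y : T) (a : 'I_(d k)) : triv k A ->
  A (q_upd w a) y = (a == y k)%:R * A w (q_upd y (w k)).
Proof. by move=> tA; rewrite -{1}(upd_id y k) tA. Qed.

Lemma Ek_mulr k A B : triv k A -> Ek k (q_opmul B A) = q_opmul (Ek k B) A.
Proof.
move=> tA; apply: functional_extensionality => x; apply: functional_extensionality => y.
rewrite EkE /q_opmul.
transitivity ((x k == y k)%:R * \sum_(w : T | w k == x k) \sum_(a : 'I_(d k)) \sum_(b : 'I_(d k))
   rho k a b * (B (q_upd x b) (q_upd w a) * A w (q_upd y (w k)))).
  congr (_ * _).
  transitivity (\sum_(a : 'I_(d k)) \sum_(b : 'I_(d k)) \sum_(w : T | w k == x k)
     rho k a b * (B (q_upd x b) (q_upd w a) * A w (q_upd y (w k)))); last first.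
    rewrite [RHS]exchange_big /=; apply: eq_bigr => a _; by rewrite [RHS]exchange_big.
  apply: eq_bigr => a _; apply: eq_bigr => b _; rewrite mulr_sumr.
  rewrite (sum_upd k (x k)); apply: eq_bigr => w wk.
  under eq_bigr do rewrite (triv_eq2 _ _ _ _ _ tA) upd_at upd_upd.
  rewrite -mulr_sumr; congr (_ * _).
  under eq_bigr do rewrite mulrCA.
  by rewrite sum_delta.
rewrite (sum_upd k (x k)) mulr_sumr; apply: eq_bigr => w wk; symmetry.
under eq_bigr do rewrite (triv_eq2 _ _ _ _ _ tA) EkE upd_at.
rewrite (bigD1 (x k)) //= [X in _ + X]big1 ?addr0; last first.
  by move=> b bx; rewrite [x k == b]eq_sym (negbTE bx) !mul0r.
rewrite eqxx mul1r mulrCA; congr (_ * _); rewrite mulr_suml; apply: eq_bigr => a _.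
rewrite mulr_suml; apply: eq_bigr => b _; by rewrite -mulrA upd_upd.
Qed.

Lemma Ek_triv k A : triv k A -> Ek k A = A.
Proof. by move=> tA; have := Ek_mull k A (@q_opid C T) tA; rewrite Ek_id !opmul_id. Qed.

Lemma upd_idc (x : T) k (c : 'I_(d k)) : x k == c -> q_upd x c = x.
Proof. by move/eqP <-; rewrite upd_id. Qed.

Lemma rho_upd k (x z : T) (a b : 'I_(d k)) :
  rhoT (q_upd x a) (q_upd z b) = rho k a b * Rk k x z.
Proof. by rewrite (rho_split k) !upd_at Rk_upd. Qed.

Lemma expectE (U : finType) (tau Y : op C U) : q_expect tau Y = \sum_x \sum_z tau x z * Y z x.
Proof. by []. Qed.

Lemma E_Ek k Y : q_expect rhoT (Ek k Y) = q_expect rhoT Y.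
Proof.
apply: (case_c k) => [c|hT]; last by rewrite !expectE !big1 // => x; case: (hT x).
rewrite !expectE.
transitivity (\sum_(x : T | x k == c) \sum_(z : T | z k == c) Rk k x z * Ek k Y z x).
  rewrite (sum_upd k c); apply: eq_bigr => x xc.
  under eq_bigr do rewrite (sum_upd k c).
  rewrite exchange_big /=; apply: eq_bigr => z zc.
  under eq_bigr => a _ do under eq_bigr => b _ do rewrite rho_upd triv_Ek (eqP zc) (upd_idc _ _ _ xc).
  transitivity (\sum_(a : 'I_(d k)) rho k a a * (Rk k x z * Ek k Y z x)).
    apply: eq_bigr => a _.
    transitivity (\sum_(i : 'I_(d k)) (i == a)%:R * (rho k a i * (Rk k x z * Ek k Y z x))).
      by apply: eq_bigr => i _; ring.
    by rewrite sum_delta.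
  by rewrite -mulr_suml tr1 mul1r.
symmetry; rewrite (sum_upd k c); apply: eq_bigr => x xc.
under eq_bigr do rewrite (sum_upd k c).
rewrite exchange_big /=; apply: eq_bigr => z zc.
rewrite EkE (eqP zc) (eqP xc) eqxx mul1r mulr_sumr; apply: eq_bigr => a _.
rewrite mulr_sumr; apply: eq_bigr => b _.
by rewrite rho_upd; ring.
Qed.

Definition G2 k l (Y : op C T) (x y : T) :=
  \sum_(a : 'I_(d k)) \sum_(b : 'I_(d k)) \sum_(a' : 'I_(d l)) \sum_(b' : 'I_(d l))
    rho k a b * rho l a' b' * Y (q_upd (q_upd x b) b') (q_upd (q_upd y a) a').

Lemma EkElE k l Y (x y : T) : k != l ->
  Ek k (Ek l Y) x y = (x k == y k)%:R * (x l == y l)%:R * G2 k l Y x y.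
Proof.
move=> kl; rewrite EkE -mulrA; congr (_ * _).
rewrite /G2 mulr_sumr; apply: eq_bigr => a _; rewrite mulr_sumr; apply: eq_bigr => b _.
rewrite EkE !upd_ne // mulrCA; congr (_ * _).
rewrite mulr_sumr; apply: eq_bigr => a' _; rewrite mulr_sumr; apply: eq_bigr => b' _.
by ring.
Qed.

Lemma Ek_comm k l Y : k != l -> Ek k (Ek l Y) = Ek l (Ek k Y).
Proof.
move=> kl; apply: functional_extensionality => x; apply: functional_extensionality => y.
rewrite EkElE // EkElE 1?eq_sym // [_ * (x l == y l)%:R]mulrC; congr (_ * _).
rewrite /G2 exchange4; apply: eq_bigr => a _; apply: eq_bigr => b _.
apply: eq_bigr => a' _; apply: eq_bigr => b' _.
have lk : l != k by rewrite eq_sym.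
rewrite mulrC (upd_comm x _ _ lk).
by rewrite (upd_comm y a' a kl); ring.
Qed.

Lemma triv_El k l Y : l != k -> triv k Y -> triv k (Ek l Y).
Proof.
move=> lk tY x y a b; have kl : k != l by rewrite eq_sym.
rewrite !EkE !(upd_ne _ _ _ kl) mulrCA; congr (_ * _).
rewrite mulr_sumr; apply: eq_bigr => a' _; rewrite mulr_sumr; apply: eq_bigr => b' _.
rewrite (upd_comm x a b' kl) (upd_comm y b a' kl) tY (upd_ne _ _ _ lk).
by rewrite (upd_comm y a' (x k) lk); ring.
Qed.

Definition opsub (A B : op C T) : op C T := fun x y => A x y - B x y.

Lemma triv_sub k A B : triv k A -> triv k B -> triv k (opsub A B).
Proof. by move=> tA tB x y a b; rewrite /opsub tA tB mulrBr. Qed.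

Lemma Ek_sub k A B : Ek k (opsub A B) = opsub (Ek k A) (Ek k B).
Proof.
apply: functional_extensionality => x; apply: functional_extensionality => y.
rewrite /opsub !EkE -mulrBr; congr (_ * _); rewrite -sumrB; apply: eq_bigr => a _.
by rewrite -sumrB; apply: eq_bigr => b _; rewrite mulrBr.
Qed.

Lemma Ek_sum k (I : finType) (P : pred I) (F : I -> op C T) (x y : T) :
  Ek k (fun x y => \sum_(i | P i) F i x y) x y = \sum_(i | P i) Ek k (F i) x y.
Proof.
rewrite EkE; symmetry.
under eq_bigr do rewrite EkE.
rewrite -mulr_sumr; congr (_ * _).
rewrite exchange_big /=; apply: eq_bigr => a _; rewrite exchange_big /=.
by apply: eq_bigr => b _; rewrite mulr_sumr.
Qed.

Lemma opmul_subl A B M : q_opmul (opsub A B) M = opsub (q_opmul A M) (q_opmul B M).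
Proof.
apply: functional_extensionality => x; apply: functional_extensionality => y.
by rewrite /opsub /q_opmul -sumrB; apply: eq_bigr => z _; rewrite mulrBl.
Qed.

Lemma opmul_subr A B M : q_opmul M (opsub A B) = opsub (q_opmul M A) (q_opmul M B).
Proof.
apply: functional_extensionality => x; apply: functional_extensionality => y.
by rewrite /opsub /q_opmul -sumrB; apply: eq_bigr => z _; rewrite mulrBr.
Qed.

Lemma E_sub A B : q_expect rhoT (opsub A B) = q_expect rhoT A - q_expect rhoT B.
Proof.
rewrite !expectE -sumrB; apply: eq_bigr => x _.
by rewrite -sumrB; apply: eq_bigr => z _; rewrite /opsub mulrBr.
Qed.

Lemma ED2 k V : q_expect rhoT (q_opmul (q_Dop rho k V) (q_Dop rho k V)) =
  q_expect rhoT (q_opmul V V) - q_expect rhoT (q_opmul (Ek k V) (Ek k V)).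
Proof.
have -> : q_Dop rho k V = opsub V (Ek k V) by [].
rewrite opmul_subl !opmul_subr !E_sub.
rewrite -(E_Ek k (q_opmul V (Ek k V))) (Ek_mulr _ _ _ (triv_Ek k V)).
rewrite -(E_Ek k (q_opmul (Ek k V) V)) (Ek_mull _ _ _ (triv_Ek k V)).
by ring.
Qed.

Section Herm.
Hypothesis hermrho : forall i a b, rho i b a = (rho i a b)^*.

Lemma herm_Ek k Y : q_hermitian Y -> q_hermitian (Ek k Y).
Proof.
move=> hY x y; rewrite !EkE rmorphM /= conjC_nat eq_sym; congr (_ * _).
rewrite rmorph_sum /= exchange_big; apply: eq_bigr => a _.
rewrite rmorph_sum /=; apply: eq_bigr => b _.
by rewrite rmorphM /= -hermrho -hY.
Qed.

End Herm.

Section Pos.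
Variable g : forall i : 'I_n, 'I_(d i) -> 'I_(d i) -> C.
Hypothesis hg : forall i a b, rho i a b = \sum_k (g i k a)^* * g i k b.

Lemma psd_rhoT (v : T -> C) : 0 <= \sum_x \sum_y (v x)^* * rhoT x y * v y.
Proof.
have rE : forall x y : T, rhoT x y =
    \sum_(f : T) (\prod_i g i (f i) (x i))^* * \prod_i g i (f i) (y i).
  move=> x y; rewrite /q_prod_state; under eq_bigr do rewrite hg.
  rewrite -(@sum_prod_dffun C n d (fun i m => (g i m (x i))^* * g i m (y i))).
  by apply: eq_bigr => f _; rewrite rmorph_prod -big_split.
pose u := fun f : T => \sum_(y : T) (\prod_i g i (f i) (y i)) * v y.
suff -> : \sum_x \sum_y (v x)^* * rhoT x y * v y = \sum_(f : T) (u f)^* * u f.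
  by apply: sumr_ge0 => f _; rewrite mulrC mul_conjC_ge0.
transitivity (\sum_(x : T) \sum_(y : T) \sum_(f : T)
   (v x)^* * (\prod_i g i (f i) (x i))^* * ((\prod_i g i (f i) (y i)) * v y)).
  apply: eq_bigr => x _; apply: eq_bigr => y _.
  by rewrite rE mulr_sumr mulr_suml; apply: eq_bigr => f _; ring.
under eq_bigr => x _ do rewrite exchange_big.
rewrite exchange_big; apply: eq_bigr => f _.
rewrite /u rmorph_sum big_distrl /=; apply: eq_bigr => x _.
rewrite big_distrr /=; apply: eq_bigr => y _.
by rewrite rmorphM /=; ring.
Qed.

Lemma E_sq_ge0 V : q_hermitian V -> 0 <= q_expect rhoT (q_opmul V V).
Proof.
move=> hV; rewrite expectE.
suff -> : \sum_x \sum_z rhoT x z * q_opmul V V z x = \sum_(w : T) \sum_(x : T) \sum_(z : T) (V x w)^* * rhoT x z * V z w.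
  by apply: sumr_ge0 => w _; apply: (psd_rhoT (fun z => V z w)).
transitivity (\sum_(x : T) \sum_(w : T) \sum_(z : T) (V x w)^* * rhoT x z * V z w); last first.
  by rewrite exchange_big.
apply: eq_bigr => x _.
transitivity (\sum_(z : T) \sum_(w : T) (V x w)^* * rhoT x z * V z w); last first.
  by rewrite exchange_big.
apply: eq_bigr => z _; rewrite /q_opmul mulr_sumr; apply: eq_bigr => w _.
by rewrite -hV; ring.
Qed.

End Pos.

Lemma opmulE (U : finType) (A B : op C U) x y : q_opmul A B x y = \sum_z A x z * B z y.
Proof. by []. Qed.

Lemma sum_pair (F : T * T -> C) : \sum_p F p = \sum_(a : T) \sum_(b : T) F (a, b).
Proof. by rewrite pair_bigA; apply: eq_bigr => -[]. Qed.

Lemma sum_ind (P : pred T) (F : T -> C) : \sum_w (P w)%:R * F w = \sum_(w | P w) F w.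
Proof. by rewrite [RHS]big_mkcond; apply: eq_bigr => w _; case: (P w); rewrite ?mul1r ?mul0r. Qed.

Definition sw (i : 'I_n) (q : T * T) : T * T := (q_upd q.1 (q.2 i), q_upd q.2 (q.1 i)).

Lemma mulF i (A : op C (T * T)%type) p q : q_opmul A (@q_swapop C n d i) p q = A p (sw i q).
Proof.
rewrite /q_opmul; under eq_bigr => r _ do rewrite mulrC.
transitivity (\sum_r (r == sw i q)%:R * A p r); last by rewrite sum_delta.
by apply: eq_bigr => -[r1 r2] _; rewrite /q_swapop /sw xpair_eqE.
Qed.

Lemma S2 i (c : 'I_(d i)) (G : 'I_(d i) -> C) (b : 'I_(d i)) :
  \sum_(p : T) rhoT p (q_upd p b) * G (p i) = \sum_a rho i a b * G a.
Proof.
rewrite (sum_upd i c).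
transitivity (\sum_(w : T | w i == c) Rk i w w * \sum_a rho i a b * G a).
  apply: eq_bigr => w _; rewrite mulr_sumr; apply: eq_bigr => a _.
  by rewrite upd_upd rho_upd upd_at; ring.
by rewrite -mulr_suml sumR mul1r.
Qed.

Lemma swap_expect i Y :
  q_expect (q_optensor rhoT rhoT)
    (q_opmul (q_opmul (q_opmul (q_optensor Y (@q_opid C T)) (@q_swapop C n d i))
                      (q_optensor Y (@q_opid C T))) (@q_swapop C n d i))
  = q_expect rhoT (q_opmul Y (Ek i Y)).
Proof.
set YI := q_optensor Y (@q_opid C T).
have ME : forall q p : T * T,
   q_opmul (q_opmul (q_opmul YI (@q_swapop C n d i)) YI) (@q_swapop C n d i) q p =
   \sum_(t : T) Y q.1 (q_upd t (p.1 i)) * (q.2 == q_upd p.2 (t i))%:R * Y t (q_upd p.1 (p.2 i)).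
  move=> q p; rewrite mulF opmulE sum_pair; apply: eq_bigr => t1 _.
  under eq_bigr do rewrite mulF.
  transitivity (\sum_(t2 : T) (t2 == (sw i p).2)%:R *
     (Y q.1 (q_upd t1 (t2 i)) * (q.2 == q_upd t2 (t1 i))%:R * Y t1 (sw i p).1)).
    by apply: eq_bigr => t2 _; rewrite /YI /q_optensor /q_opid /=; ring.
  by rewrite sum_delta /sw /= upd_at upd_upd.
apply: (case_c i) => [c|hT]; last by rewrite !expectE sum_pair !big1 // => x; case: (hT x).
rewrite !expectE sum_pair; apply: eq_bigr => x _.
under eq_bigr do rewrite sum_pair.
rewrite exchange_big /=; apply: eq_bigr => z _.
under eq_bigr => p2 _ do under eq_bigr => q2 _ do rewrite ME /q_optensor /= mulr_sumr.
under eq_bigr => p2 _ do rewrite exchange_big /=.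
rewrite exchange_big /=.
transitivity (\sum_(t : T) \sum_(a : 'I_(d i)) rho i a (t i) *
   (rhoT x z * Y z (q_upd t (x i)) * Y t (q_upd x a))).
  apply: eq_bigr => t _.
  transitivity (\sum_(p2 : T) rhoT p2 (q_upd p2 (t i)) *
     (rhoT x z * Y z (q_upd t (x i)) * Y t (q_upd x (p2 i)))); last first.
    by rewrite (S2 i c (fun a => rhoT x z * Y z (q_upd t (x i)) * Y t (q_upd x a))).
  apply: eq_bigr => p2 _.
  transitivity (\sum_(q2 : T) (q2 == q_upd p2 (t i))%:R * (rhoT p2 q2 *
     (rhoT x z * Y z (q_upd t (x i)) * Y t (q_upd x (p2 i))))); last by rewrite sum_delta.
  by apply: eq_bigr => q2 _; ring.
rewrite (sum_upd i (x i)) /q_opmul mulr_sumr.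
under [RHS]eq_bigr do rewrite EkE mulrA mulrCA.
rewrite sum_ind; apply: eq_bigr => w wx.
rewrite exchange_big mulr_sumr; apply: eq_bigr => a _.
rewrite mulr_sumr; apply: eq_bigr => b _.
rewrite upd_at upd_upd (upd_idE wx); ring.
Qed.

Lemma acts_triv i j k A : q_acts_on2 i j A -> k != i -> k != j -> triv k A.
Proof.
case=> Y hY ki kj x y a b; rewrite !hY !(upd_ne _ _ _ ki) !(upd_ne _ _ _ kj).
set P := fun m : 'I_n => (m != i) && (m != j).
have B1 : [forall m, P m ==> (q_upd x a m == q_upd y b m)] =
   (a == b) && [forall m, P m ==> (x m == q_upd y (x k) m)].
  apply/forallP/andP => [h|[ab h] m].
    split.
      by have := h k; rewrite /P ki kj /= !upd_at.
    apply/forallP => m; case: (eqVneq k m) => [<-|km]; first by rewrite upd_at eqxx implybT.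
    by have := h m; rewrite !upd_ne.
  case: (eqVneq k m) => [<-|km]; first by rewrite !upd_at ab implybT.
  by have := forallP h m; rewrite !upd_ne.
rewrite /P in B1; rewrite B1; case: (a == b) => /=; by rewrite ?mul1r ?mul0r ?mulr0.
Qed.

Lemma triv_scalar K : (forall k, triv k K) -> forall x y z : T, K x y = (x == y)%:R * K z z.
Proof.
move=> tK.
have diag0 : forall x y : T, x != y -> K x y = 0.
  move=> x y xy; case: (boolP [forall k, x k == y k]) => [/forallP h | /forallPn [k hk]].
    by case/eqP: xy; apply/ffunP => k; apply/eqP/h.
  by rewrite (triv_eq _ _ _ _ (tK k)) (negbTE hk) mul0r.
have dd : forall x z : T, K x x = K z z.
  suff H : forall m, forall x z : T, (forall k : 'I_n, (m <= k)%N -> x k = z k) -> K x x = K z z.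
    by move=> x z; apply: (H n) => k; rewrite leqNgt ltn_ord.
  elim => [|m IH] x z hxz.
    by have -> : x = z by apply/ffunP => k; apply: hxz.
  case: (ltnP m n) => mn; last first.
    by apply: IH => k hk; have := leq_trans mn hk; rewrite leqNgt ltn_ord.
  pose k0 := Ordinal mn.
  have -> : K x x = K (q_upd x (z k0)) (q_upd x (z k0)) by rewrite (tK k0) eqxx mul1r upd_id.
  apply: IH => k hk; case: (eqVneq k0 k) => [<-|kk]; first by rewrite upd_at.
  rewrite upd_ne //; apply: hxz; rewrite ltn_neqAle hk andbT; exact: kk.
move=> x y z; case: (eqVneq x y) => [<-|xy]; first by rewrite mul1r (dd x z).
by rewrite diag0 // mul0r.
Qed.

Lemma E_scalar_sq K : (forall k, triv k K) ->
  q_expect rhoT (q_opmul K K) = (q_expect rhoT K) ^+ 2.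
Proof.
move=> tK; case: (pickP (@predT T)) => [z _|hT]; last first.
  have s0 : forall F : T -> C, \sum_x F x = 0 by move=> F; apply: big1 => x; have := hT x.
  by rewrite !expectE !s0 expr0n.
have hK := triv_scalar K tK.
have E1 : q_expect rhoT K = K z z.
  rewrite expectE.
  transitivity (\sum_(x : T) \sum_(y : T) (y == x)%:R * (rhoT x y * K z z)).
    by apply: eq_bigr => x _; apply: eq_bigr => y _; rewrite (hK y x z); ring.
  by under eq_bigr do rewrite sum_delta; rewrite -mulr_suml tr_rhoT mul1r.
rewrite E1 expectE.
transitivity (\sum_(x : T) \sum_(y : T) (y == x)%:R * (rhoT x y * K z z ^+ 2)).
  apply: eq_bigr => x _; apply: eq_bigr => y _; rewrite opmulE.
  under eq_bigr => w _ do rewrite (hK y w z) (hK w x z) -mulrA.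
  by rewrite sum_delta'; ring.
by under eq_bigr do rewrite sum_delta; rewrite -mulr_suml tr_rhoT mul1r.
Qed.

Section Iter.
Hypothesis hermrho : forall i a b, rho i b a = (rho i a b)^*.
Variable g : forall i : 'I_n, 'I_(d i) -> 'I_(d i) -> C.
Hypothesis hg : forall i a b, rho i a b = \sum_k (g i k a)^* * g i k b.

Definition Pl (s : seq 'I_n) (Y : op C T) := foldr (fun k acc => Ek k acc) Y s.

Lemma herm_sub A B : q_hermitian A -> q_hermitian B -> q_hermitian (opsub A B).
Proof. by move=> hA hB x y; rewrite /opsub hA hB rmorphB. Qed.

Lemma herm_D k Y : q_hermitian Y -> q_hermitian (q_Dop rho k Y).
Proof. by move=> hY; apply: herm_sub => //; apply: herm_Ek. Qed.

Lemma herm_Pl s Y : q_hermitian Y -> q_hermitian (Pl s Y).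
Proof. by move=> hY; elim: s => //= k s IH; apply: herm_Ek. Qed.

Lemma E_Pl s Y : q_expect rhoT (Pl s Y) = q_expect rhoT Y.
Proof. by elim: s => //= k s IH; rewrite E_Ek. Qed.

Lemma Pl_sub s A B : Pl s (opsub A B) = opsub (Pl s A) (Pl s B).
Proof. by elim: s => //= k s ->; rewrite Ek_sub. Qed.

Lemma Ek_Pl k s Y : k \notin s -> Ek k (Pl s Y) = Pl s (Ek k Y).
Proof.
elim: s => //= l s IH; rewrite inE negb_or => /andP[kl ks].
by rewrite Ek_comm // IH.
Qed.

Lemma D_Pl k s Y : k \notin s -> q_Dop rho k (Pl s Y) = Pl s (q_Dop rho k Y).
Proof.
move=> ks; have -> : q_Dop rho k Y = opsub Y (Ek k Y) by [].
by rewrite Pl_sub -Ek_Pl.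
Qed.

Lemma triv_Pl k s Y : k \in s -> triv k (Pl s Y).
Proof.
elim: s => //= l s IH; rewrite inE; case: (eqVneq k l) => [-> _|kl /= ks].
  exact: triv_Ek.
by apply: triv_El; [rewrite eq_sym | apply: IH].
Qed.

Lemma E_sq_Ek k V : q_hermitian V ->
  q_expect rhoT (q_opmul (Ek k V) (Ek k V)) <= q_expect rhoT (q_opmul V V).
Proof.
move=> hV; rewrite -subr_ge0.
have -> : q_expect rhoT (q_opmul V V) - q_expect rhoT (q_opmul (Ek k V) (Ek k V)) =
  q_expect rhoT (q_opmul (q_Dop rho k V) (q_Dop rho k V)) by rewrite ED2.
by apply: (E_sq_ge0 _ hg); apply: herm_D.
Qed.

Lemma E_sq_Pl s W : q_hermitian W ->
  q_expect rhoT (q_opmul (Pl s W) (Pl s W)) <= q_expect rhoT (q_opmul W W).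
Proof.
move=> hW; elim: s => //= k s IH.
apply: le_trans IH; apply: E_sq_Ek; exact: herm_Pl.
Qed.

Lemma ES_main s X : uniq s -> q_hermitian X ->
  q_expect rhoT (q_opmul X X) - q_expect rhoT (q_opmul (Pl s X) (Pl s X)) <=
  \sum_(k <- s) q_expect rhoT (q_opmul (q_Dop rho k X) (q_Dop rho k X)).
Proof.
move=> + hX; elim: s => [|k s IH] /=; first by rewrite subrr big_nil.
case/andP => ks us; rewrite big_cons.
have -> : q_expect rhoT (q_opmul X X) - q_expect rhoT (q_opmul (Ek k (Pl s X)) (Ek k (Pl s X))) =
  q_expect rhoT (q_opmul (q_Dop rho k (Pl s X)) (q_Dop rho k (Pl s X))) +
  (q_expect rhoT (q_opmul X X) - q_expect rhoT (q_opmul (Pl s X) (Pl s X))).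
  by rewrite ED2; ring.
apply: lerD; last exact: IH.
rewrite D_Pl //; apply: E_sq_Pl; exact: herm_D.
Qed.

End Iter.

End Main.
Module GramM.
Local Open Scope sesquilinear_scope.

Section Gram.
Variables (C : numClosedFieldType) (m : nat) (A : 'I_m -> 'I_m -> C).
Hypothesis hA : forall a b, A b a = (A a b)^*.
Hypothesis pA : q_psd A.

Let M : 'M[C]_m := \matrix_(a, b) A a b.
Let P := spectralmx M.
Let s := spectral_diag M.
Definition gramv (k a : 'I_m) : C := sqrtC (s 0 k) * P k a.

Lemma gram_psd a b : A a b = \sum_k (gramv k a)^* * gramv k b.
Proof.
have Mh : M \is hermsymmx.
  by apply/is_hermitianmxP; rewrite expr0 scale1r; apply/matrixP => i j; rewrite !mxE.
have /orthomx_spectralP ME := hermitian_normalmx Mh.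
have Pu : P \is unitarymx := spectral_unitarymx M.
rewrite -/P -/s invmx_unitary // in ME.
have entry : forall a b, A a b = \sum_k (P k a)^* * s 0 k * P k b.
  move=> i j; have -> : A i j = M i j by rewrite mxE.
  rewrite {1}ME.
  rewrite mxE; apply: eq_bigr => k _; by rewrite mul_mx_diag !mxE.
have D : P *m M *m P ^t* = diag_mx s.
  rewrite {1}ME !mulmxA (unitarymxP Pu) mul1mx -mulmxA (unitarymxP Pu) mulmx1 //.
have s0 : forall k, 0 <= s 0 k.
  move=> k; have := pA (fun b => (P k b)^*).
  have -> : s 0 k = diag_mx s k k by rewrite mxE eqxx mulr1n.
  rewrite -D mxE.
  have -> : \sum_x \sum_y ((P k x)^*)^* * A x y * (P k y)^* =
     \sum_j (P *m M) k j * (P ^t*) j k.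
    rewrite exchange_big; apply: eq_bigr => j _; rewrite !mxE mulr_suml.
    by apply: eq_bigr => i _; rewrite conjCK !mxE.
  done.
rewrite entry; apply: eq_bigr => k _.
rewrite /gramv rmorphM /= [(sqrtC _)^*]geC0_conj ?sqrtC_ge0 //.
have sq := sqrtCK (s 0 k); rewrite expr2 in sq.
transitivity ((P k a)^* * (sqrtC (s 0 k) * sqrtC (s 0 k)) * P k b); first by rewrite sq.
by ring.
Qed.

End Gram.

End GramM.
Import GramM.

Lemma sum_delta2 (C : numClosedFieldType) (I : finType) (c : I) (F : I -> C) :
  \sum_b (b == c)%:R * F b = F c.
Proof.
rewrite (bigD1 c) //= eqxx mul1r big1 ?addr0 // => b /negbTE ->; by rewrite mul0r.
Qed.

Section PsdHerm.
Variables (C : numClosedFieldType) (T : finType) (A : T -> T -> C).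

Lemma formE (a b : T) (al be : C) :
  let v := fun x => (x == a)%:R * al + (x == b)%:R * be in
  \sum_x \sum_y (v x)^* * A x y * v y =
  al^* * al * A a a + al^* * be * A a b + be^* * al * A b a + be^* * be * A b b.
Proof.
move=> v.
have inner : forall x, \sum_y (v x)^* * A x y * v y = (v x)^* * (A x a * al + A x b * be).
  move=> x; rewrite /v.
  transitivity (\sum_y ((y == a)%:R * ((v x)^* * A x y * al) + (y == b)%:R * ((v x)^* * A x y * be))).
    by apply: eq_bigr => y _; rewrite /v; ring.
  by rewrite big_split /= !sum_delta2 /v; ring.
under eq_bigr do rewrite inner.
transitivity (\sum_x ((x == a)%:R * (al^* * (A x a * al + A x b * be)) + (x == b)%:R * (be^* * (A x a * al + A x b * be)))).
  by apply: eq_bigr => x _; rewrite /v rmorphD !rmorphM /= !conjC_nat; ring.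
by rewrite big_split /= !sum_delta2; ring.
Qed.

Lemma eq_lin (U V X Y : C) : U = V -> X - Y = U - V -> X = Y.
Proof. by move=> -> h; apply/eqP; rewrite -subr_eq0 h subrr. Qed.

Lemma psd_herm : q_psd A -> forall a b, A b a = (A a b)^*.
Proof.
move=> pA a b.
have Fc : forall al be, let w := al^* * al * A a a + al^* * be * A a b + be^* * al * A b a + be^* * be * A b b in w^* = w.
  move=> al be w; rewrite /w -formE; apply/conj_Creal/ger0_real.
  exact: (pA (fun x => (x == a)%:R * al + (x == b)%:R * be)).
have haa : (A a a)^* = A a a.
  by have := Fc 1 0; rewrite /= !rmorph0 !rmorph1 !(mul0r, mulr0, mul1r, addr0).
have hbb : (A b b)^* = A b b.
  by have := Fc 0 1; rewrite /= !rmorph0 !rmorph1 !(mul0r, mulr0, mul1r, addr0, add0r).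
have h11 := Fc 1 1; have h1i := Fc 1 'i.
rewrite /= !rmorph1 !mul1r in h11 h1i.
rewrite !rmorphD /= haa hbb in h11.
rewrite !rmorphD !rmorphM /= haa hbb !conjCi rmorphN /= conjCi in h1i.
set p := A a b in h11 h1i *; set q := A b a in h11 h1i *.
have e1 : p^* + q^* = p + q by apply: (eq_lin _ _ _ _ h11); ring.
have e2 : 'i * (q^* - p^* - p + q) = 0 by apply: (eq_lin _ _ _ _ h1i); rewrite ?rmorph1; ring.
move/eqP: e2; rewrite mulf_eq0 (negbTE (neq0Ci C)) /= => /eqP e2.
have e3 : (q^* - p) *+ 2 = 0.
  by rewrite mulr2n; transitivity ((p^* + q^*) - (p + q) + (q^* - p^* - p + q)); [ring | rewrite e1 e2 subrr addr0].
move/eqP: e3; rewrite mulrn_eq0 /= subr_eq0 => /eqP e3.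
by rewrite -e3 conjCK.
Qed.

End PsdHerm.

Theorem corollary6p7 (C : numClosedFieldType) (n : nat) (d : 'I_n -> nat)
    (rho : forall i : 'I_n, op C 'I_(d i))
    (X : 'I_n -> 'I_n -> op C (q_idx d)) :
  (forall i : 'I_n, q_density (rho i)) ->
  (forall i j : 'I_n, i != j -> X i j = X j i) ->
  (forall i j : 'I_n, i != j -> q_hermitian (X i j) /\ q_acts_on2 i j (X i j)) ->
  let varrho := q_prod_state rho in
  let Xi : 'I_n -> op C (q_idx d) := fun i x y => \sum_(j | j != i) X i j x y in
  let Xtot : op C (q_idx d) := fun x y => \sum_i \sum_(j | j != i) X i j x y in
  q_variance varrho Xtot
    <= 4 * \sum_i q_expect varrho (q_opmul (q_Dop rho i (Xi i)) (q_Dop rho i (Xi i)))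
  /\ 4 * \sum_i q_expect varrho (q_opmul (q_Dop rho i (Xi i)) (q_Dop rho i (Xi i)))
     = 4 * \sum_i q_expect varrho (q_opmul (Xi i) (Xi i))
       - 4 * \sum_i q_expect (q_optensor varrho varrho)
               (q_opmul (q_opmul (q_opmul (q_optensor (Xi i) (@q_opid C (q_idx d))) (@q_swapop C n d i))
                             (q_optensor (Xi i) (@q_opid C (q_idx d))))
                      (@q_swapop C n d i)).
Proof.
move=> hden hsym hX varrho Xi Xtot.
have tr1 : forall i, \sum_a rho i a a = 1 by move=> i; case: (hden i).
have hermrho : forall i a b, rho i b a = (rho i a b)^*.
  by move=> i; apply: psd_herm; case: (hden i).
pose g := fun i => @gramv C (d i) (rho i).
have hg : forall i a b, rho i a b = \sum_k (g i k a)^* * g i k b.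
  by move=> i a b; apply: (gram_psd _ _ _ (hermrho i)); case: (hden i).
have hXij : forall i j, i != j -> q_hermitian (X i j) by move=> i j ij; case: (hX i j ij).
have hXi : forall i, q_hermitian (Xi i).
  move=> i x y; rewrite /Xi rmorph_sum; apply: eq_bigr => j ji; apply: hXij; by rewrite eq_sym.
have hXt : q_hermitian Xtot.
  move=> x y; rewrite /Xtot rmorph_sum; apply: eq_bigr => i _.
  rewrite rmorph_sum; apply: eq_bigr => j ji; apply: hXij; by rewrite eq_sym.
have DX0 : forall k i j, i != j -> k != i -> k != j -> forall x y, q_Dop rho k (X i j) x y = 0.
  move=> k i j ij ki kj x y.
  have tA := acts_triv C n d i j k (X i j) (hX i j ij).2 ki kj.
  by rewrite /q_Dop (Ek_triv C n d rho tr1 k (X i j) tA) subrr.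
have DX : forall k, q_Dop rho k Xtot = (fun x y => 2 * q_Dop rho k (Xi k) x y).
  move=> k; apply: functional_extensionality => x; apply: functional_extensionality => y.
  pose D := fun i j => q_Dop rho k (X i j) x y.
  have e1 : q_Dop rho k Xtot x y = \sum_i \sum_(j | j != i) D i j.
    rewrite /q_Dop (Ek_sum C n d rho k _ xpredT (fun i x y => \sum_(j | j != i) X i j x y)).
    rewrite /Xtot -sumrB; apply: eq_bigr => i _.
    by rewrite (Ek_sum C n d rho k _ (fun j => j != i) (fun j => X i j)) -sumrB.
  have e2 : q_Dop rho k (Xi k) x y = \sum_(j | j != k) D k j.
    rewrite /q_Dop /Xi (Ek_sum C n d rho k _ (fun j => j != k) (fun j => X k j)).
    by rewrite -sumrB.
  rewrite e1 e2 (bigD1 k) //=.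
  have e3 : \sum_(i | i != k) \sum_(j | j != i) D i j = \sum_(i | i != k) D k i.
    apply: eq_bigr => i ik.
    rewrite (bigD1 k) 1?eq_sym //= big1 ?addr0.
      by rewrite /D hsym.
    move=> j /andP [ji jk]; apply: DX0; by rewrite // eq_sym.
  by rewrite e3; ring.
have E_scale : forall W, q_expect varrho (q_opmul (fun x y => 2 * W x y) (fun x y => 2 * W x y))
    = 4 * q_expect varrho (q_opmul W W).
  move=> W; rewrite !expectE mulr_sumr; apply: eq_bigr => x _.
  rewrite mulr_sumr; apply: eq_bigr => z _; rewrite !opmulE mulrCA; congr (_ * _).
  rewrite mulr_sumr; apply: eq_bigr => w _; ring.
split.
  set K := Pl C n d rho (index_enum 'I_n) Xtot.
  have tK : forall k, triv C n d k K := fun k => triv_Pl C n d rho k _ Xtot (mem_index_enum k).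
  have eK := E_scalar_sq C n d rho tr1 K tK.
  rewrite /K (E_Pl C n d rho tr1) in eK.
  have es := ES_main C n d rho tr1 hermrho g hg (index_enum 'I_n) Xtot (index_enum_uniq _) hXt.
  rewrite eK in es; rewrite /q_variance /varrho; apply: (le_trans es).
  rewrite mulr_sumr; apply: ler_sum => k _; by rewrite DX E_scale.
rewrite -mulrBr -sumrB; congr (_ * _); apply: eq_bigr => i _.
rewrite /varrho (ED2 C n d rho tr1 i (Xi i)) (swap_expect C n d rho tr1 i (Xi i)).
rewrite -(E_Ek C n d rho tr1 i (q_opmul (Xi i) (q_condexp rho i (Xi i)))).
by rewrite (Ek_mulr C n d rho i _ _ (triv_Ek C n d rho i (Xi i))).
Qed.
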